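(* Let $\mathcal N : L(\mathbb C^{2^{n}})\to L(\mathbb C^{2^{k}})$ be a linear map. Let $\rho$ be an $n$-qubit density matrix and let $U^{\rho}$ be an $(r+n)$-qubit unitary preparing a purification of $\rho$, i.e. $U^{\rho}\ket{0^{r+n}}=\ket{\psi}$ with $\operatorname{Tr}_{\mathbb C^{2^{r}}}\ket{\psi}\bra{\psi}=\rho$ (the first $r$ qubits being the purifying register). Assume $U_{\mathcal N}$ is an $(m+n+k)$-qubit unitary which is an $(\alpha,m,\epsilon)$-block encoding of $\Lambda_{\mathcal N}^{\mathrm T_1}$. Consider $m+r+n+k$ qubits arranged as registers of sizes $m$, $r$, $n$, $k$ (in this order), and the unitary $$V=\bigl(\mathbb I_m\otimes U^{\rho\dagger}\otimes\mathbb I_k\bigr)\bigl(U_{\mathcal N}\otimes\mathbb I_r\bigr)\bigl(\mathbb I_m\otimes U^{\rho}\otimes\mathbb I_k\bigr),$$ where $U^{\rho}$ and $U^{\rho\dagger}$ act on the $r$- and $n$-qubit registers, and $U_{\mathcal N}\otimes\mathbb I_r$ denotes $U_{\mathcal N}$ acting on the $m$-, $n$- and $k$-qubit registers and the identity on the $r$-qubit register. Then $V$ is an $(\alpha,m+r+n,\epsilon)$-block encoding of $\mathcal N(\rho)$, i.e. $\bigl\|\mathcal N(\rho)-\alpha(\bra{0^{m+r+n}}\otimes\mathbb I_k)V(\ket{0^{m+r+n}}\otimes\mathbb I_k)\bigr\|_\infty\le\epsilon$.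
   Context: $\|\cdot\|_\infty$ is the operator norm and $\mathbb I_j$ the identity on $j$ qubits. Block encoding: for an $n$-qubit matrix $A$, an $(m+n)$-qubit unitary $U$ is an $(\alpha,m,\epsilon)$-block encoding of $A$ (with $\alpha,\epsilon\ge 0$) if $\bigl\|A-\alpha(\bra{0^m}\otimes\mathbb I_n)U(\ket{0^m}\otimes\mathbb I_n)\bigr\|_\infty\le\epsilon$. For a linear map $\mathcal N:L(\mathcal X)\to L(\mathcal Y)$, its Choi matrix is $\Lambda_{\mathcal N}=(\mathcal I\otimes\mathcal N)(\ket{\Phi^+}\bra{\Phi^+})\in L(\mathcal X\otimes\mathcal Y)$, where $\ket{\Phi^+}=\sum_i\ket{ii}$ is the unnormalized maximally entangled vector on $\mathcal X\otimes\mathcal X$ (computational basis). $\Lambda_{\mathcal N}^{\mathrm T_1}$ denotes the partial transpose (in the computational basis) of $\Lambda_{\mathcal N}$ on the first tensor factor $\mathcal X$. *)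

(* Defs.v *)
From HB Require Import structures.
From mathcomp Require Import all_boot all_order all_algebra.
From mathcomp Require Import classical_sets reals.
From mathcomp.real_closed Require Import complex mxtens.
Unset Strict Implicit. Unset Printing Implicit Defensive.
Import Order.TTheory GRing.Theory Num.Theory.
Local Open Scope ring_scope.

Section QuantumDefs.
Variable R : realType.
Local Notation C := R[i].

Definition adjmx {p q} (A : 'M[C]_(p, q)) : 'M[C]_(q, p) :=
  (map_mx (fun z : C => z^*) A)^T.

Definition unitary {d} (U : 'M[C]_d) : Prop :=
  adjmx U *m U = 1%:M /\ U *m adjmx U = 1%:M.

Definition cnorm2 (z : C) : R := (complex.Re z) ^+ 2 + (complex.Im z) ^+ 2.

Definition vnorm {d} (v : 'cV[C]_d) : R := Num.sqrt (\sum_i cnorm2 (v i 0)).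

Definition opnorm {p q} (A : 'M[C]_(p, q)) : R :=
  sup [set vnorm (A *m v) | v in [set v : 'cV[C]_q | vnorm v <= 1]]%classic.

Definition psd {d} (A : 'M[C]_d) : Prop :=
  adjmx A = A /\ forall v : 'cV[C]_d, 0 <= (adjmx v *m A *m v) 0 0.
Definition density {d} (rho : 'M[C]_d) : Prop := psd rho /\ \tr rho = 1.

(* --- qubit registers: C^(2^a) (x) C^(2^b) = C^(2^(a+b)), big-endian
       (the first register is the most significant), as for the Kronecker
       product [tensmx] --- *)
Definition qjoin a b (i : 'I_(2 ^ a)) (j : 'I_(2 ^ b)) : 'I_(2 ^ (a + b)) :=
  cast_ord (esym (expnD 2 a b)) (mxtens_index (i, j)).
Definition qsplit a b (x : 'I_(2 ^ (a + b))) : 'I_(2 ^ a) * 'I_(2 ^ b) :=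
  mxtens_unindex (cast_ord (expnD 2 a b) x).

Definition qkron a b (A : 'M[C]_(2 ^ a)) (B : 'M[C]_(2 ^ b)) : 'M[C]_(2 ^ (a + b)) :=
  castmx (esym (expnD 2 a b), esym (expnD 2 a b)) (A *t B).

Definition qcast a b (e : a = b) (A : 'M[C]_(2 ^ a)) : 'M[C]_(2 ^ b) :=
  castmx (congr1 (expn 2) e, congr1 (expn 2) e) A.

Definition ket0 a : 'cV[C]_(2 ^ a) := \col_i ((val i == 0%N)%:R).

Definition bra0I a s : 'M[C]_(2 ^ s, 2 ^ (a + s)) :=
  castmx (mul1n _, esym (expnD 2 a s)) ((ket0 a)^T *t (1%:M : 'M[C]_(2 ^ s))).
Definition ket0I a s : 'M[C]_(2 ^ (a + s), 2 ^ s) :=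
  castmx (esym (expnD 2 a s), mul1n _) (ket0 a *t (1%:M : 'M[C]_(2 ^ s))).

Definition block_encoding (alpha : R) (a : nat) (eps : R) s
    (A : 'M[C]_(2 ^ s)) (U : 'M[C]_(2 ^ (a + s))) : Prop :=
  opnorm (A - (alpha%:C)%C *: (bra0I a s *m U *m ket0I a s)) <= eps.

Definition ptrace1 a b (M : 'M[C]_(2 ^ (a + b))) : 'M[C]_(2 ^ b) :=
  \matrix_(i, j) \sum_(l < 2 ^ a) M (qjoin a b l i) (qjoin a b l j).

Definition blk d e (M : 'M[C]_(d * e)) (i j : 'I_d) : 'M[C]_e :=
  \matrix_(p, q) M (mxtens_index (i, p)) (mxtens_index (j, q)).

(* (I (x) N)(M) for M in L(C^d (x) C^d) *)
Definition idtens d e (N : 'M[C]_d -> 'M[C]_e) (M : 'M[C]_(d * d)) : 'M[C]_(d * e) :=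
  \sum_(i < d) \sum_(j < d) (delta_mx i j *t N (blk d d M i j)).

(* unnormalized maximally entangled vector |Phi+> = sum_i |ii> *)
Definition phiplus d : 'cV[C]_(d * d) :=
  \col_x (((mxtens_unindex x).1 == (mxtens_unindex x).2)%:R).

Definition choi d e (N : 'M[C]_d -> 'M[C]_e) : 'M[C]_(d * e) :=
  idtens d e N (phiplus d *m adjmx (phiplus d)).

Definition ptranspose1 d e (M : 'M[C]_(d * e)) : 'M[C]_(d * e) :=
  \sum_(i < d) \sum_(j < d) (delta_mx j i *t blk d e M i j).

Definition choiT1 n k (N : 'M[C]_(2 ^ n) -> 'M[C]_(2 ^ k)) : 'M[C]_(2 ^ (n + k)) :=
  castmx (esym (expnD 2 n k), esym (expnD 2 n k)) (ptranspose1 _ _ (choi _ _ N)).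

Definition embRN m r n k (W : 'M[C]_(2 ^ (r + n))) : 'M[C]_(2 ^ (m + r + n + k)) :=
  qcast _ _ (congr1 (addn^~ k) (addnA m r n))
        (qkron _ _ (qkron _ _ (1%:M : 'M[C]_(2 ^ m)) W) (1%:M : 'M[C]_(2 ^ k))).

(* U_N (x) I_r : U_N on the m-, n-, k-qubit registers, identity on the r one *)
Definition embMNK m r n k (U : 'M[C]_(2 ^ (m + (n + k)))) : 'M[C]_(2 ^ (m + r + n + k)) :=
  \matrix_(x, y)
    let: (x3, xk) := @qsplit (m + r + n) k x in
    let: (x2, xn) := @qsplit (m + r) n x3 in
    let: (xm, xr) := @qsplit m r x2 in
    let: (y3, yk) := @qsplit (m + r + n) k y in
    let: (y2, yn) := @qsplit (m + r) n y3 in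
    let: (ym, yr) := @qsplit m r y2 in
    U (qjoin m (n + k) xm (qjoin n k xn xk)) (qjoin m (n + k) ym (qjoin n k yn yk)) * (xr == yr)%:R.

Definition circuitV m r n k (Urho : 'M[C]_(2 ^ (r + n)))
    (UN : 'M[C]_(2 ^ (m + (n + k)))) : 'M[C]_(2 ^ (m + r + n + k)) :=
  embRN m r n k (adjmx Urho) *m embMNK m r n k UN *m embRN m r n k Urho.

End QuantumDefs.

Arguments adjmx {R p q}.
Arguments unitary {R d}.
Arguments vnorm {R d}.
Arguments opnorm {R p q}.
Arguments psd {R d}.
Arguments density {R d}.
Arguments block_encoding {R} alpha a eps s A U.
Arguments ptrace1 {R} a b M.
Arguments choiT1 {R} n k N.
Arguments circuitV {R} m r n k Urho UN.

(* Main.v *)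
Require Import Defs.
From HB Require Import structures.
From mathcomp Require Import all_boot all_order all_algebra.
From mathcomp Require Import classical_sets reals.
From mathcomp.real_closed Require Import complex mxtens.
From mathcomp Require Import ring lra.
Import Order.TTheory GRing.Theory Num.Theory.
Local Open Scope ring_scope.
Lemma qjoin_val a b i j : val (qjoin a b i j) = (i * 2 ^ b + j)%N.
Proof. by []. Qed.

Lemma qsplitK a b i j : qsplit a b (qjoin a b i j) = (i, j).
Proof. by rewrite /qsplit /qjoin cast_ordKV mxtens_indexK. Qed.

Lemma qjoinK a b x : qjoin a b (qsplit a b x).1 (qsplit a b x).2 = x.
Proof. by rewrite /qsplit /qjoin -surjective_pairing mxtens_unindexK cast_ordK. Qed.

Lemma qjoin_inj a b i j i' j' : qjoin a b i j = qjoin a b i' j' -> i = i' /\ j = j'.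
Proof. by move=> /(congr1 (qsplit a b)); rewrite !qsplitK => -[-> ->]. Qed.

Lemma sum_qjoin (V : nmodType) a b (F : 'I_(2 ^ (a + b)) -> V) :
  \sum_x F x = \sum_i \sum_j F (qjoin a b i j).
Proof.
rewrite pair_big /=.
rewrite (reindex (fun p : 'I_(2^a) * 'I_(2^b) => qjoin a b p.1 p.2)) //=.
exists (qsplit a b) => [p _|x _]; first by rewrite qsplitK -surjective_pairing.
by rewrite qjoinK.
Qed.

Lemma exp2_gt0 a : (0 < 2 ^ a)%N. Proof. by rewrite expn_gt0. Qed.
Definition z0 a : 'I_(2 ^ a) := Ordinal (exp2_gt0 a).

Lemma qjoin00 a b : qjoin a b (z0 a) (z0 b) = z0 (a + b).
Proof. by apply: val_inj; rewrite qjoin_val /= mul0n. Qed.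

Lemma sum_delta (V : pzRingType) (T : finType) (x : T) (f : T -> V) :
  \sum_a (x == a)%:R * f a = f x.
Proof.
rewrite (bigD1 x) //= eqxx mul1r big1 ?addr0 // => a /negbTE.
by rewrite eq_sym => ->; rewrite mul0r.
Qed.

Lemma sum_deltar (V : pzRingType) (T : finType) (x : T) (f : T -> V) :
  \sum_a f a * (a == x)%:R = f x.
Proof.
rewrite (bigD1 x) //= eqxx mulr1 big1 ?addr0 // => a /negbTE.
by move=> ->; rewrite mulr0.
Qed.

Section S.
Variable R : realType.
Local Notation C := R[i].

Lemma tensmxE' m n p q (A : 'M[C]_(m, n)) (B : 'M[C]_(p, q)) x y :
  (A *t B) x y = A (mxtens_unindex x).1 (mxtens_unindex y).1 *
                 B (mxtens_unindex x).2 (mxtens_unindex y).2.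
Proof. by rewrite -{1}(mxtens_unindexK x) -{1}(mxtens_unindexK y) tensmxE. Qed.

Lemma qkronE a b (A : 'M[C]_(2 ^ a)) (B : 'M[C]_(2 ^ b)) x y :
  qkron R a b A B x y = A (qsplit a b x).1 (qsplit a b y).1 * B (qsplit a b x).2 (qsplit a b y).2.
Proof. rewrite /qkron castmxE tensmxE' /=. by rewrite !(eq_irrelevance (esym (esym (expnD 2 a b))) (expnD 2 a b)). Qed.

Lemma adjmxE p q (A : 'M[C]_(p, q)) i j : adjmx A i j = (A j i)^*.
Proof. by rewrite /adjmx !mxE. Qed.

Lemma ket0E a x (j : 'I_1) : ket0 R a x j = (x == z0 a)%:R.
Proof. by rewrite mxE. Qed.

Lemma mulket0 p a (U : 'M[C]_(p, 2 ^ a)) x : (U *m ket0 R a) x 0 = U x (z0 a).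
Proof.
rewrite mxE (bigD1 (z0 a)) //= ket0E eqxx mulr1 big1 ?addr0 // => y /negbTE ny.
by rewrite ket0E ny mulr0.
Qed.

Lemma ket0IE a s (i : 'I_(2 ^ a)) (l : 'I_(2 ^ s)) j :
  ket0I R a s (qjoin a s i l) j = ((i == z0 a) && (l == j))%:R.
Proof.
rewrite /ket0I castmxE tensmxE' /qjoin cast_ordK mxtens_indexK /= ket0E !mxE.
set o := Ordinal _; have -> : o = j by apply: val_inj; rewrite /= modn_small.
by case: (i == z0 a); rewrite ?mul1r ?mul0r.
Qed.

Lemma bra0IE a s (i : 'I_(2 ^ a)) (l : 'I_(2 ^ s)) j :
  bra0I R a s j (qjoin a s i l) = ((i == z0 a) && (j == l))%:R.
Proof.
rewrite /bra0I castmxE tensmxE' /qjoin cast_ordK mxtens_indexK /= !mxE.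
set o := Ordinal _; have -> : o = j by apply: val_inj; rewrite /= modn_small.
change (\val i == 0%N) with (i == z0 a).
by case: (i == z0 a); rewrite ?mul1r ?mul0r.
Qed.

Lemma blockE a s (M : 'M[C]_(2 ^ (a + s))) i j :
  (bra0I R a s *m M *m ket0I R a s) i j = M (qjoin a s (z0 a) i) (qjoin a s (z0 a) j).
Proof.
rewrite mxE sum_qjoin (bigD1 (z0 a)) //= [X in _ + X]big1 => [|c /negbTE nc]; last first.
  by apply: big1 => l _; rewrite ket0IE nc mulr0.
rewrite addr0 (bigD1 j) //= [X in _ + X]big1 => [|l /negbTE nl]; last first.
  by rewrite ket0IE eqxx nl mulr0.
rewrite ket0IE !eqxx mulr1 addr0 mxE sum_qjoin.
rewrite (bigD1 (z0 a)) //= [X in _ + X]big1 => [|c /negbTE nc]; last first.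
  by apply: big1 => l _; rewrite bra0IE nc mul0r.
rewrite addr0 (bigD1 i) //= [X in _ + X]big1 => [|l /negbTE nl]; last first.
  by rewrite bra0IE eqxx eq_sym nl mul0r.
by rewrite bra0IE !eqxx mul1r addr0.
Qed.

Section Reg.
Variables m r n k : nat.

Definition J (a : 'I_(2 ^ m)) (b : 'I_(2 ^ r)) (c : 'I_(2 ^ n)) (d : 'I_(2 ^ k)) :
  'I_(2 ^ (m + r + n + k)) :=
  qjoin (m + r + n) k (qjoin (m + r) n (qjoin m r a b) c) d.

Lemma sumJ (V : nmodType) (F : 'I_(2 ^ (m + r + n + k)) -> V) :
  \sum_x F x = \sum_a \sum_b \sum_c \sum_d F (J a b c d).
Proof.
by rewrite sum_qjoin sum_qjoin sum_qjoin.
Qed.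

Lemma embMNKE (U : 'M[C]_(2 ^ (m + (n + k)))) a b c d a' b' c' d' :
  embMNK R m r n k U (J a b c d) (J a' b' c' d') =
  U (qjoin m (n + k) a (qjoin n k c d)) (qjoin m (n + k) a' (qjoin n k c' d')) * (b == b')%:R.
Proof. by rewrite /embMNK mxE /J !qsplitK. Qed.

Lemma castJ e a b c d :
  cast_ord e (J a b c d) = qjoin (m + (r + n)) k (qjoin m (r + n) a (qjoin r n b c)) d.
Proof.
apply: val_inj => /=. by congr (_ * _ + _)%N; rewrite expnD mulnDl mulnA addnA.
Qed.

Lemma embRNE (W : 'M[C]_(2 ^ (r + n))) a b c d a' b' c' d' :
  embRN R m r n k W (J a b c d) (J a' b' c' d') =
  (a == a')%:R * W (qjoin r n b c) (qjoin r n b' c') * (d == d')%:R.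
Proof.
rewrite /embRN /qcast castmxE !castJ qkronE !qsplitK /= qkronE !qsplitK /= !mxE.
by [].
Qed.

Lemma sum_eq1 {V : nmodType} {T : finType} (x : T) (F : T -> V) :
  (forall a, a != x -> F a = 0) -> \sum_a F a = F x.
Proof. by move=> H; rewrite (bigD1 x) //= big1 ?addr0. Qed.

Lemma J000 i : qjoin (m + r + n) k (z0 (m + r + n)) i = J (z0 m) (z0 r) (z0 n) i.
Proof. by rewrite /J !qjoin00. Qed.

Lemma ABE (U : 'M[C]_(2 ^ (r + n))) (UN : 'M[C]_(2 ^ (m + (n + k)))) i a' b' c' d' :
  (embRN R m r n k (adjmx U) *m embMNK R m r n k UN) (J (z0 m) (z0 r) (z0 n) i) (J a' b' c' d') =
  \sum_c (U (qjoin r n b' c) (z0 (r + n)))^* *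
     UN (qjoin m (n + k) (z0 m) (qjoin n k c i)) (qjoin m (n + k) a' (qjoin n k c' d')).
Proof.
rewrite mxE sumJ (sum_eq1 (z0 m)); last first.
  move=> a na; apply: big1 => b _; apply: big1 => c _; apply: big1 => d _.
  by rewrite embRNE eq_sym (negbTE na) !mul0r.
rewrite (sum_eq1 b'); last first.
  move=> b nb; apply: big1 => c _; apply: big1 => d _.
  by rewrite embMNKE (negbTE nb) !mulr0.
apply: eq_bigr => c _; rewrite (sum_eq1 i); last first.
  by move=> d nd; rewrite embRNE eq_sym (negbTE nd) !mulr0 mul0r.
rewrite embRNE embMNKE adjmxE qjoin00 !eqxx /=.
by rewrite !mulr1 mul1r.
Qed.

Lemma BVE (U : 'M[C]_(2 ^ (r + n))) (UN : 'M[C]_(2 ^ (m + (n + k)))) i j :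
  (bra0I R (m + r + n) k *m circuitV m r n k U UN *m ket0I R (m + r + n) k) i j =
  \sum_b \sum_c \sum_c' (U (qjoin r n b c) (z0 (r + n)))^* * U (qjoin r n b c') (z0 (r + n)) *
     UN (qjoin m (n + k) (z0 m) (qjoin n k c i)) (qjoin m (n + k) (z0 m) (qjoin n k c' j)).
Proof.
rewrite blockE !J000 /circuitV mxE sumJ (sum_eq1 (z0 m)); last first.
  move=> a na; apply: big1 => b _; apply: big1 => c _; apply: big1 => d _.
  by rewrite embRNE (negbTE na) !mul0r mulr0.
apply: eq_bigr => b _.
have -> : \sum_c' \sum_d (embRN R m r n k (adjmx U) *m embMNK R m r n k UN)
      (J (z0 m) (z0 r) (z0 n) i) (J (z0 m) b c' d) *
    embRN R m r n k U (J (z0 m) b c' d) (J (z0 m) (z0 r) (z0 n) j) =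
  \sum_c' \sum_c (U (qjoin r n b c) (z0 (r + n)))^* *
     UN (qjoin m (n + k) (z0 m) (qjoin n k c i)) (qjoin m (n + k) (z0 m) (qjoin n k c' j)) *
     U (qjoin r n b c') (z0 (r + n)).
  apply: eq_bigr => c' _; rewrite (sum_eq1 j); last first.
    by move=> d nd; rewrite embRNE (negbTE nd) mulr0 mulr0.
  by rewrite ABE embRNE qjoin00 !eqxx /= mulr1 mul1r mulr_suml.
rewrite exchange_big /=; apply: eq_bigr => c _; apply: eq_bigr => c' _.
by rewrite mulrAC.
Qed.

End Reg.

Lemma sum_delta2 (T1 T2 : finType) (x1 : T1) (x2 : T2) (f : T1 -> T2 -> C) :
  \sum_p \sum_q ((p == x1) && (q == x2))%:R * f p q = f x1 x2.
Proof.
rewrite (sum_eq1 x1); last first.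
  by move=> p np; apply: big1 => q _; rewrite (negbTE np) mul0r.
rewrite (sum_eq1 x2); last by move=> q nq; rewrite (negbTE nq) andbF mul0r.
by rewrite !eqxx mul1r.
Qed.

Lemma choiT1E n k (N : 'M[C]_(2 ^ n) -> 'M[C]_(2 ^ k)) c i c' j :
  choiT1 n k N (qjoin n k c i) (qjoin n k c' j) = N (delta_mx c' c) i j.
Proof.
rewrite /choiT1 castmxE /qjoin !cast_ordK /ptranspose1 summxE.
under eq_bigr do rewrite summxE.
under eq_bigr do under eq_bigr do rewrite tensmxE mxE.
rewrite (sum_eq1 c'); last by move=> p np; apply: big1 => q _; rewrite [c' == p]eq_sym (negbTE np) andbF mul0r.
rewrite (sum_eq1 c); last by move=> q nq; rewrite [c == q]eq_sym (negbTE nq) mul0r.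
rewrite !eqxx mul1r /blk mxE /choi /idtens summxE.
under eq_bigr do rewrite summxE.
under eq_bigr do under eq_bigr do rewrite tensmxE mxE [c' == _]eq_sym [c == _]eq_sym.
rewrite sum_delta2; congr (N _ i j); apply/matrixP => s t.
rewrite !mxE big_ord1 adjmxE !mxE !mxtens_indexK /= conjC_nat.
by rewrite -natrM mulnb [c' == s]eq_sym [c == t]eq_sym.
Qed.

Lemma NrhoE n k (N : {linear 'M[C]_(2 ^ n) -> 'M[C]_(2 ^ k)}) rho i j :
  N rho i j = \sum_c \sum_c' rho c' c * N (delta_mx c' c) i j.
Proof.
rewrite {1}(matrix_sum_delta rho) linear_sum summxE exchange_big; apply: eq_bigr => c _.
rewrite linear_sum summxE; apply: eq_bigr => c' _; by rewrite linearZ mxE.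
Qed.

End S.

Section N.
Variable R : realType.
Local Notation C := R[i].
Local Notation "x %:CC" := ((x%:C)%C) (at level 2, format "x %:CC").

Definition nsq {d} (v : 'cV[C]_d) : C := \sum_i v i 0 * (v i 0)^*.

Lemma nsq_ge0 d (v : 'cV[C]_d) : 0 <= nsq v.
Proof. by apply: sumr_ge0 => i _; apply: mul_conjC_ge0. Qed.

Lemma cnormE (z : C) : (cnorm2 R z)%:CC = z * z^*.
Proof. by rewrite -normCK /cnorm2 add_Re2_Im2. Qed.

Lemma cnorm_ge0 (z : C) : 0 <= cnorm2 R z.
Proof. by rewrite /cnorm2 addr_ge0 ?sqr_ge0. Qed.

Lemma vnorm_ge0 d (v : 'cV[C]_d) : 0 <= vnorm v.
Proof. exact: sqrtr_ge0. Qed.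

Lemma vnormE d (v : 'cV[C]_d) : (vnorm v ^+ 2)%:CC = nsq v.
Proof.
rewrite /vnorm sqr_sqrtr ?sumr_ge0 // => [|i _]; last exact: cnorm_ge0.
rewrite rmorph_sum; apply: eq_bigr => i _; exact: cnormE.
Qed.

Lemma vnorm_le d (v : 'cV[C]_d) t : 0 <= t -> nsq v <= (t ^+ 2)%:CC -> vnorm v <= t.
Proof.
move=> t0; rewrite -vnormE lecR ler_pXn2r //; by rewrite nnegrE ?vnorm_ge0.
Qed.

Lemma nsq_le d (v : 'cV[C]_d) t : 0 <= t -> vnorm v <= t -> nsq v <= (t ^+ 2)%:CC.
Proof.
move=> t0 H; rewrite -vnormE lecR ler_pXn2r //; by rewrite nnegrE ?vnorm_ge0.
Qed.

Lemma nsqZ d (v : 'cV[C]_d) z : nsq (z *: v) = z * z^* * nsq v.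
Proof.
rewrite /nsq mulr_sumr; apply: eq_bigr => i _; rewrite mxE rmorphM.
by rewrite mulrACA.
Qed.

Lemma nsq_eq0 d (v : 'cV[C]_d) : nsq v = 0 -> v = 0.
Proof.
move=> /eqP; rewrite psumr_eq0 => [/allP H|i _]; last exact: mul_conjC_ge0.
apply/matrixP => i j; rewrite ord1 mxE.
by have := H i (mem_index_enum i); rewrite implyTb mul_conjC_eq0 => /eqP.
Qed.

Lemma real_ge0 (z : C) : 0 <= z -> z = (complex.Re z)%:CC.
Proof. by move=> z0; rewrite RRe_real // ger0_real. Qed.

Lemma entry_le d (v : 'cV[C]_d) i : v i 0 * (v i 0)^* <= nsq v.
Proof.
rewrite /nsq (bigD1 i) //= lerDl; apply: sumr_ge0 => j _; exact: mul_conjC_ge0.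
Qed.

Lemma nsq_le1 d (v : 'cV[C]_d) : vnorm v <= 1 -> nsq v <= 1.
Proof. by move=> H; have := @nsq_le _ v 1 ler01 H; rewrite expr1n rmorph1. Qed.

Lemma opnorm_bound p q (D : 'M[C]_(p, q)) :
  exists K, forall v, vnorm v <= 1 -> vnorm (D *m v) <= K.
Proof.
pose K : C := \sum_i (\sum_j `|D i j|) ^+ 2.
have K0 : 0 <= K by apply: sumr_ge0 => i _; apply: exprn_ge0; apply: sumr_ge0 => j _; exact: normr_ge0.
exists (1 + complex.Re K) => v /nsq_le1 v1.
have vj : forall j, `|v j 0| <= 1.
  move=> j; rewrite -(@expr_le1 _ 2) // normCK.
  apply: le_trans v1; exact: entry_le.
have H : nsq (D *m v) <= K.
  apply: ler_sum => i _; rewrite -normCK.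
  rewrite ler_pXn2r ?nnegrE //; last by apply: sumr_ge0 => j _.
  rewrite mxE; apply: le_trans; first exact: ler_norm_sum. apply: ler_sum => j _.
  by rewrite normrM ler_piMr.
have : vnorm (D *m v) ^+ 2 <= complex.Re K.
  by rewrite -lecR vnormE -(real_ge0 _ K0).
have := vnorm_ge0 _ (D *m v); move: (vnorm _) (complex.Re K) => x k; nra.
Qed.

Lemma vnorm0 d : vnorm (0 : 'cV[C]_d) = 0.
Proof.
apply/eqP; rewrite eq_le vnorm_ge0 andbT; apply: vnorm_le => //.
by rewrite /nsq big1 ?expr0n ?rmorph0 // => i _; rewrite mxE mul0r.
Qed.

Lemma opnorm_has_sup p q (D : 'M[C]_(p, q)) :
  has_sup [set vnorm (D *m v) | v in [set v : 'cV[C]_q | vnorm v <= 1]]%classic.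
Proof.
split; first by exists (vnorm (D *m 0)), 0 => //=; rewrite vnorm0.
have [K HK] := opnorm_bound _ _ D; exists K => _ [v v1 <-]; exact: HK.
Qed.

Lemma opnorm_ge (p q : nat) (D : 'M[C]_(p, q)) v : vnorm v <= 1 -> vnorm (D *m v) <= opnorm D.
Proof. by move=> v1; apply: sup_upper_bound (opnorm_has_sup _ _ D) _ _; exists v. Qed.

Lemma opnorm_ge0 p q (D : 'M[C]_(p, q)) : 0 <= opnorm D.
Proof.
have := opnorm_ge _ _ D 0; rewrite vnorm0 ler01 => /(_ isT) H.
apply: le_trans H; exact: vnorm_ge0.
Qed.

Lemma conjCR (x : R) : (x%:CC)^* = x%:CC.
Proof. exact: conjc_real. Qed.

Lemma nsq0 d : nsq (0 : 'cV[C]_d) = 0.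
Proof. by rewrite /nsq big1 // => i _; rewrite mxE mul0r. Qed.

Lemma opnormP p q (D : 'M[C]_(p, q)) v :
  nsq (D *m v) <= (opnorm D ^+ 2)%:CC * nsq v.
Proof.
case: (eqVneq (nsq v) 0) => [/nsq_eq0 -> | nz].
  by rewrite mulmx0 !nsq0 mulr0.
set s := vnorm v.
have s2 : s ^+ 2 != 0.
  by apply: contra nz => /eqP s0; rewrite -vnormE -/s s0 rmorph0.
pose z : C := ((s ^+ 2)^-1 * s)%:CC.
have zz : z * z^* = ((s ^+ 2)^-1)%:CC.
  rewrite conjCR -rmorphM; congr (_%:CC).
  by rewrite mulrACA -expr2 -mulrA mulVf // mulr1.
have u1 : vnorm (z *: v) <= 1.
  apply: vnorm_le => //; rewrite nsqZ zz -vnormE -/s -rmorphM mulVf // expr1n rmorph1.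
  exact: lexx.
have := nsq_le _ _ _ (opnorm_ge0 _ _ D) (opnorm_ge _ _ D _ u1).
rewrite -scalemxAr nsqZ zz => H.
rewrite -(vnormE _ v) -/s.
have -> : nsq (D *m v) = (s ^+ 2)%:CC * (((s ^+ 2)^-1)%:CC * nsq (D *m v)).
  by rewrite mulrA -rmorphM mulfV // rmorph1 mul1r.
rewrite [_ * (s ^+ 2)%:CC]mulrC; apply: ler_wpM2l => //.
rewrite ler0c; exact: sqr_ge0.
Qed.

Lemma cs (T : finType) (psi w : T -> C) : \sum_t psi t * (psi t)^* = 1 ->
  (\sum_t (psi t)^* * w t) * (\sum_t (psi t)^* * w t)^* <= \sum_t w t * (w t)^*.
Proof.
move=> H1; set y := \sum_t (psi t)^* * w t.
have Y1 : \sum_t w t * (psi t)^* = y by apply: eq_bigr => t _; rewrite mulrC.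
have Y2 : \sum_t psi t * (w t)^* = y^*.
  rewrite /y rmorph_sum; apply: eq_bigr => t _; by rewrite rmorphM /= conjCK mulrC.
have E : \sum_t (w t - psi t * y) * (w t - psi t * y)^* =
         \sum_t w t * (w t)^* - y * y^*.
  rewrite (eq_bigr (fun t => w t * (w t)^* - (w t * (psi t)^*) * y^* -
      (psi t * (w t)^*) * y + (psi t * (psi t)^*) * (y * y^*))); last first.
    by move=> t _; rewrite rmorphB rmorphM; ring.
  rewrite big_split /= sumrB sumrB -!mulr_suml Y1 Y2 H1; ring.
rewrite -subr_ge0 -E; apply: sumr_ge0 => t _; exact: mul_conjC_ge0.
Qed.

Lemma cs2 (T1 T2 : finType) (psi w : T1 -> T2 -> C) :
  \sum_a \sum_b psi a b * (psi a b)^* = 1 ->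
  (\sum_a \sum_b (psi a b)^* * w a b) * (\sum_a \sum_b (psi a b)^* * w a b)^*
    <= \sum_a \sum_b w a b * (w a b)^*.
Proof.
move=> H; rewrite !pair_big /=; apply: cs.
by rewrite pair_big in H.
Qed.

End N.

Local Notation "x %:CC" := ((x%:C)%C) (at level 2, format "x %:CC").

Theorem theorem1 (R : realType) (n k r m : nat)
  (N : {linear 'M[R[i]]_(2 ^ n) -> 'M[R[i]]_(2 ^ k)})
  (rho : 'M[R[i]]_(2 ^ n)) (Urho : 'M[R[i]]_(2 ^ (r + n)))
  (UN : 'M[R[i]]_(2 ^ (m + (n + k)))) (alpha eps : R) :
  density rho ->
  unitary Urho ->
  ptrace1 r n ((Urho *m ket0 R (r + n)) *m adjmx (Urho *m ket0 R (r + n))) = rho ->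
  unitary UN ->
  0 <= alpha -> 0 <= eps ->
  block_encoding alpha m eps (n + k) (choiT1 n k N) UN ->
  block_encoding alpha (m + r + n) eps k (N rho) (circuitV m r n k Urho UN).
Proof.
move=> _ [Uu _] Hrho _ a0 e0.
rewrite /block_encoding.
set A := bra0I R m (n + k) *m UN *m ket0I R m (n + k).
set D := choiT1 n k N - _ *: A => HD.
pose psi (b : 'I_(2 ^ r)) (c : 'I_(2 ^ n)) : R[i] := Urho (qjoin r n b c) (z0 (r + n)).
have psi1 : \sum_b \sum_c psi b c * (psi b c)^* = 1.
  have := congr1 (fun M : 'M[R[i]]_(2 ^ (r + n)) => M (z0 (r + n)) (z0 (r + n))) Uu.
  rewrite /= mxE [RHS]mxE eqxx /= sum_qjoin => H; apply: (etrans _ H).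
  apply: eq_bigr => b _; apply: eq_bigr => c _; by rewrite adjmxE mulrC.
have rhoE : forall c' c, rho c' c = \sum_b psi b c' * (psi b c)^*.
  move=> c' c; rewrite -Hrho /ptrace1 mxE; apply: eq_bigr => b _.
  by rewrite mxE big_ord1 adjmxE !mulket0.
set Err := N rho - _.
have ErrE : forall i j, Err i j =
    \sum_b \sum_c \sum_c' (psi b c)^* * psi b c' * D (qjoin n k c i) (qjoin n k c' j).
  move=> i j; rewrite /Err 3!mxE BVE NrhoE.
  have DE : forall c c', D (qjoin n k c i) (qjoin n k c' j) = N (delta_mx c' c) i j -
      alpha%:CC * UN (qjoin m (n + k) (z0 m) (qjoin n k c i)) (qjoin m (n + k) (z0 m) (qjoin n k c' j)).
    by move=> c c'; rewrite /D 3!mxE choiT1E /A blockE.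
  symmetry.
  under eq_bigr => b _ do under eq_bigr => c _ do under eq_bigr => c' _ do rewrite DE mulrBr.
  under eq_bigr => b _ do under eq_bigr => c _ do rewrite sumrB.
  under eq_bigr => b _ do rewrite sumrB.
  rewrite sumrB; congr (_ - _).
    symmetry.
    under eq_bigr => c _ do under eq_bigr => c' _ do rewrite rhoE mulr_suml.
    under eq_bigr => c _ do rewrite exchange_big.
    rewrite exchange_big; apply: eq_bigr => b _; apply: eq_bigr => c _; apply: eq_bigr => c' _.
    by rewrite /psi; ring.
  symmetry.
  rewrite mulr_sumr; apply: eq_bigr => b _; rewrite mulr_sumr; apply: eq_bigr => c _.
  rewrite mulr_sumr; apply: eq_bigr => c' _; rewrite /psi; ring.
apply: ge_sup.
  by exists (vnorm (Err *m 0)), 0 => //=; rewrite vnorm0.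
move=> _ [v v1 <-]; apply: vnorm_le e0 _.
pose Psi b : 'cV[R[i]]_(2 ^ (n + k)) := \col_u (psi b (qsplit n k u).1 * v (qsplit n k u).2 0).
pose w b := D *m Psi b.
have yE : forall i, (Err *m v) i 0 = \sum_b \sum_c (psi b c)^* * w b (qjoin n k c i) 0.
  move=> i; rewrite mxE.
  under eq_bigr => j _ do rewrite ErrE mulr_suml.
  rewrite exchange_big; apply: eq_bigr => b _.
  under eq_bigr => j _ do rewrite mulr_suml.
  rewrite exchange_big; apply: eq_bigr => c _.
  rewrite /w [X in _ = _ * X]mxE sum_qjoin mulr_sumr.
  under eq_bigr => j _ do rewrite mulr_suml.
  rewrite exchange_big; apply: eq_bigr => c' _.
  rewrite mulr_sumr; apply: eq_bigr => j _.
  rewrite /Psi mxE qsplitK /=; ring.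
pose od := opnorm D.
have step1 : nsq R (Err *m v) <= \sum_b nsq R (w b).
  rewrite /nsq.
  have H : forall i, (Err *m v) i 0 * ((Err *m v) i 0)^* <=
      \sum_b \sum_c w b (qjoin n k c i) 0 * (w b (qjoin n k c i) 0)^*.
    by move=> i; rewrite yE; exact: (cs2 _ _ _ psi (fun b c => w b (qjoin n k c i) 0) psi1).
  apply: le_trans (ler_sum _ (fun i _ => H i)) _.
  rewrite exchange_big /=; apply: ler_sum => b _; rewrite sum_qjoin exchange_big /=.
  exact: lexx.
have step2 : \sum_b nsq R (w b) <= \sum_b (od ^+ 2)%:CC * nsq R (Psi b).
  by apply: ler_sum => b _; apply: opnormP.
have step3 : \sum_b nsq R (Psi b) = nsq R v.
  transitivity (\sum_b \sum_c psi b c * (psi b c)^* * nsq R v); last first.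
    by under eq_bigr => b _ do rewrite -mulr_suml; rewrite -mulr_suml psi1 mul1r.
  apply: eq_bigr => b _; rewrite /nsq sum_qjoin; apply: eq_bigr => c _.
  rewrite mulr_sumr; apply: eq_bigr => j _; rewrite /Psi mxE qsplitK /=.
  by rewrite rmorphM; ring.
have od0 : 0 <= od := opnorm_ge0 _ _ _ D.
have step4 : (od ^+ 2)%:CC * nsq R v <= (eps ^+ 2)%:CC.
  apply: le_trans (_ : (od ^+ 2)%:CC * 1 <= _).
    apply: ler_wpM2l; first by rewrite ler0c exprn_ge0.
    exact: nsq_le1.
  by rewrite mulr1 lecR ler_pXn2r ?nnegrE //; exact: le_trans od0 HD.
apply: le_trans step4; apply: le_trans step1 _; apply: le_trans step2 _.
by rewrite -mulr_sumr step3.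
Qed.
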